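(* Let $k\geq 2$ be an integer and $g_k(x)=xf_{k-1}(x)/f_k(x)$. Then $g_k'(x)>0$ for every $x>0$.
   Context: $f_t(x)=e^{-x}\sum_{i\geq t}x^i/i!$. *)

(* Defs.v *)
From Stdlib Require Import Reals.
From Coquelicot Require Import Coquelicot.
Open Scope R_scope.

Definition f (t : nat) (x : R) : R :=
  exp (- x) * Series (fun i : nat => if Nat.leb t i then x ^ i / INR (Factorial.fact i) else 0).

Definition g (k : nat) (x : R) : R := x * f (k - 1) x / f k x.

(* Main.v *)
Require Import Defs.
From Stdlib Require Import Reals Lra Lia.
From Coquelicot Require Import Coquelicot.
Open Scope R_scope.

Fixpoint P (t : nat) (x : R) : R :=
  match t with O => 0 | S t' => P t' x + x ^ t' / INR (Factorial.fact t') end.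

Lemma sum_full_P x t : sum_n (fun n => x ^ n / INR (Factorial.fact n)) t = P (S t) x.
Proof.
  induction t.
  - rewrite sum_O. simpl. lra.
  - rewrite sum_Sn, IHt. simpl P. reflexivity.
Qed.

Lemma f_eq t x : (1 <= t)%nat -> Defs.f t x = 1 - exp (-x) * P t x.
Proof.
  intros Ht.
  set (full := fun n => x ^ n / INR (Factorial.fact n)).
  set (s := fun i : nat => if Nat.leb t i then x ^ i / INR (Factorial.fact i) else 0).
  assert (Hfull : is_series full (exp x)).
  { eapply is_series_ext; [| apply (is_exp_Reals x)].
    intros n. unfold full. rewrite pow_n_pow. unfold scal; simpl.
    unfold mult; simpl. lra. }
  assert (Hs0 : forall n, (n < t)%nat -> sum_n s n = 0).
  { induction n; intros Hn.
    - rewrite sum_O. unfold s. destruct (Nat.leb_spec t 0); [lia|reflexivity].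
    - rewrite sum_Sn, IHn by lia. unfold s.
      destruct (Nat.leb_spec t (S n)); [lia|]. unfold plus; simpl. lra. }
  assert (Ht' : is_series (fun k => full (t + k)%nat) (exp x - P t x)).
  { apply is_series_incr_n; [lia|].
    destruct t as [|t']; [lia|]. simpl pred. unfold full. rewrite sum_full_P.
    match goal with |- is_series _ ?l => replace l with (exp x) by (unfold plus; simpl; ring) end.
    exact Hfull. }
  assert (Hs : is_series s (exp x - P t x)).
  { apply (is_series_decr_n s t); [lia|].
    rewrite Hs0 by lia. unfold plus, opp; simpl.
    eapply is_series_ext; [| replace (exp x - P t x + - 0) with (exp x - P t x) by ring; exact Ht'].
    intros n. unfold s, full. destruct (Nat.leb_spec t (t+n)); [reflexivity|lia]. }
  unfold Defs.f. fold s. rewrite (is_series_unique _ _ Hs).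
  rewrite Rmult_minus_distr_l. rewrite <- exp_plus.
  replace (-x + x) with 0 by ring. rewrite exp_0. ring.
Qed.

Lemma mono_deriv t x : is_derive (fun y => y ^ S t / INR (Factorial.fact (S t))) x (x ^ t / INR (Factorial.fact t)).
Proof.
  assert (H0 : INR (Factorial.fact t) <> 0) by (apply not_0_INR; apply Factorial.fact_neq_0).
  auto_derive; [exact I|]. 
  change (match t with 0%nat => 1 | S _ => INR t + 1 end) with (INR (S t)).
  replace (INR (Factorial.fact t + t * Factorial.fact t)) with (INR (S t) * INR (Factorial.fact t))
    by (rewrite <- mult_INR; f_equal). field. split; [exact H0|]. apply not_0_INR; lia.
Qed.

Lemma P_deriv t x : is_derive (P (S t)) x (P t x).
Proof.
  induction t.
  - apply (is_derive_ext (fun _ : R => 1)).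
    + intros; simpl; field.
    + simpl. auto_derive; auto.
  - change (P (S (S t))) with (fun y => P (S t) y + y ^ S t / INR (Factorial.fact (S t))).
    simpl P at 2. apply (is_derive_plus (P (S t))). exact IHt. apply mono_deriv.
Qed.

Lemma deriv_val (F : R -> R) x l l' : is_derive F x l -> l = l' -> is_derive F x l'.
Proof. intros H ->; exact H. Qed.

Lemma f_deriv s x : is_derive (Defs.f (S s)) x (exp (-x) * x ^ s / INR (Factorial.fact s)).
Proof.
  apply (is_derive_ext (fun y => 1 - exp (-y) * P (S s) y)).
  { intros y. symmetry. apply f_eq. lia. }
  assert (H1 : is_derive (fun y => exp (-y)) x (- exp (-x))) by (auto_derive; auto; ring).
  pose proof (is_derive_mult _ _ x _ _ H1 (P_deriv s x) ltac:(intros; apply Rmult_comm)) as H2.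
  pose proof (is_derive_minus (fun _ => 1) _ x 0 _ (is_derive_const 1 x) H2) as H3.
  eapply deriv_val; [exact H3|].
  unfold minus, plus, opp, mult; simpl. field. apply not_0_INR, Factorial.fact_neq_0.
Qed.

Lemma left_smaller h m d a : derivable_pt_lim h m d -> 0 < d -> a < m ->
  exists w, a < w < m /\ h w < h m.
Proof.
  intros H Hd Ham.
  destruct (H (d/2) ltac:(lra)) as [del Hdel].
  set (e := Rmin (del/2) ((m - a)/2)).
  assert (He1 : e <= del/2) by apply Rmin_l.
  assert (He2 : e <= (m-a)/2) by apply Rmin_r.
  assert (He0 : 0 < e) by (apply Rmin_pos; pose proof (cond_pos del); lra).
  specialize (Hdel (-e) ltac:(lra)).
  assert (Habs : Rabs (-e) < del) by (rewrite Rabs_Ropp, Rabs_pos_eq; pose proof (cond_pos del); lra).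
  specialize (Hdel Habs).
  exists (m + -e). split; [lra|].
  set (q := (h (m + - e) - h m) / - e) in *.
  assert (Hq : 0 < q) by (apply Rabs_def2 in Hdel; lra).
  assert (Heq : h (m + - e) - h m = q * (- e)) by (unfold q; field; lra).
  nra.
Qed.

Lemma pos_lemma (h : R -> R) :
  (forall y, 0 < y -> exists d, is_derive h y d /\ (h y <= 0 -> 0 < d)) ->
  (forall y, 0 < y <= 1 -> -y <= h y) ->
  forall y, 0 < y -> 0 < h y.
Proof.
  intros Hd Hlow y0 Hy0.
  destruct (Rlt_or_le 0 (h y0)) as [|Hneg]; [assumption|exfalso].
  destruct (Hd y0 Hy0) as [d0 [Hd0 Hd0p]].
  apply is_derive_Reals in Hd0.
  destruct (left_smaller h y0 d0 0 Hd0 (Hd0p Hneg) Hy0) as [z [Hz Hhz]].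
  set (x := Rmin z (Rmin 1 (- h z / 2))).
  assert (Hx1 : x <= z) by apply Rmin_l.
  assert (Hx2 : x <= 1) by (eapply Rle_trans; [apply Rmin_r| apply Rmin_l]).
  assert (Hx3 : x <= - h z / 2) by (eapply Rle_trans; [apply Rmin_r| apply Rmin_r]).
  assert (Hx0 : 0 < x) by (apply Rmin_pos; [lra| apply Rmin_pos; lra]).
  assert (Hhx : h z < h x) by (pose proof (Hlow x ltac:(lra)); lra).
  assert (Hcont : forall c, x <= c <= z -> continuity_pt h c).
  { intros c Hc. destruct (Hd c ltac:(lra)) as [dc [Hdc _]].
    apply is_derive_Reals in Hdc.
    apply derivable_continuous_pt. exists dc. exact Hdc. }
  destruct (continuity_ab_min h x z Hx1 Hcont) as [mx [Hmin Hmx]].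
  assert (Hmz : h mx <= h z) by (apply Hmin; lra).
  assert (Hmxx : x < mx).
  { destruct (Rle_lt_or_eq_dec x mx (proj1 Hmx)) as [|E]; [assumption|].
    subst mx. lra. }
  destruct (Hd mx ltac:(lra)) as [dm [Hdm Hdmp]].
  apply is_derive_Reals in Hdm.
  destruct (left_smaller h mx dm x Hdm (Hdmp ltac:(lra)) Hmxx) as [w [Hw Hhw]].
  pose proof (Hmin w ltac:(lra)). lra.
Qed.

Lemma P0 s : P (S s) 0 = 1.
Proof. induction s; simpl in *. lra. rewrite IHs. lra. Qed.

Lemma fact_pos n : 0 < INR (Factorial.fact n).
Proof. apply lt_0_INR. apply Factorial.lt_O_fact. Qed.

Lemma f_pos s x : 0 < x -> 0 < Defs.f (S s) x.
Proof.
  intros Hx.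
  destruct (MVT_cor2 (Defs.f (S s)) (fun y => exp (-y) * y ^ s / INR (Factorial.fact s)) 0 x Hx)
    as [c [Hc Hcr]].
  { intros c _. apply is_derive_Reals. apply f_deriv. }
  rewrite (f_eq (S s) 0) in Hc by lia. rewrite P0, Ropp_0, exp_0 in Hc.
  assert (0 < exp (- c) * c ^ s / INR (Factorial.fact s)).
  { apply Rdiv_lt_0_compat; [|apply fact_pos]. apply Rmult_lt_0_compat; [apply exp_pos|apply pow_lt; lra]. }
  nra.
Qed.

Section Main.
Variable m : nat.
Definition K := INR (S (S m)).
Definition al (y : R) := exp (- y) * y ^ S m / INR (Factorial.fact (S m)).
Definition bb (y : R) := Defs.f (S (S m)) y.
Definition hh (y : R) := bb y ^ 2 / al y + (K - y) * bb y - y * al y.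

Lemma al_pos y : 0 < y -> 0 < al y.
Proof.
  intros Hy. unfold al. apply Rdiv_lt_0_compat; [|apply fact_pos].
  apply Rmult_lt_0_compat; [apply exp_pos|apply pow_lt; lra].
Qed.

Lemma al_deriv y : is_derive al y (exp (- y) * (INR (S m) * y ^ m - y ^ S m) / INR (Factorial.fact (S m))).
Proof.
  unfold al. auto_derive; [exact I|].
  change (match m with 0%nat => 1 | S _ => INR m + 1 end) with (INR (S m)).
  change (Factorial.fact m + m * Factorial.fact m)%nat with (Factorial.fact (S m)).
  change (y ^ S m) with (y * y ^ m).
  assert (H := fact_pos (S m)). field. lra.
Qed.

Lemma c_eq y : Defs.f (S m) y = bb y + al y.
Proof.
  unfold bb, al. rewrite !f_eq by lia.
  change (P (S (S m)) y) with (P (S m) y + y ^ S m / INR (Factorial.fact (S m))). set (u := y ^ S m). set (F := INR (Factorial.fact (S m))). set (p := P (S m) y). set (e := exp (-y)). assert (0 < F) by apply fact_pos. field. lra.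
Qed.

Lemma hh_deriv y : 0 < y -> exists d, is_derive hh y d /\ (hh y <= 0 -> 0 < d).
Proof.
  intros Hy.
  assert (Hb : is_derive bb y (al y)) by (unfold bb, al; apply f_deriv).
  pose proof (al_deriv y) as Ha.
  pose proof (al_pos y Hy) as Hal.
  pose proof (f_pos (S m) y Hy) as Hbp. fold (bb y) in Hbp.
  pose proof (is_derive_pow bb 2 y _ Hb) as H1.
  pose proof (is_derive_div _ _ y _ _ H1 Ha ltac:(lra)) as H2.
  assert (H3' : is_derive (fun z => K - z) y (-1)) by (auto_derive; auto; ring).
  pose proof (is_derive_mult _ _ y _ _ H3' Hb ltac:(intros; apply Rmult_comm)) as H3.
  assert (H4' : is_derive (fun z : R => z) y 1) by (auto_derive; auto).
  pose proof (is_derive_mult _ _ y _ _ H4' Ha ltac:(intros; apply Rmult_comm)) as H4.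
  pose proof (is_derive_plus _ _ y _ _ H2 H3) as H5.
  pose proof (is_derive_minus _ _ y _ _ H5 H4) as H6.
  exists (bb y - (INR (S m) / y - 1) * bb y ^ 2 / al y).
  assert (Hsm : y ^ S m = y * y ^ m) by reflexivity.
  assert (Hal' : al y = exp (- y) * (y * y ^ m) / INR (Factorial.fact (S m))) by (unfold al; rewrite Hsm; reflexivity).
  assert (HF := fact_pos (S m)). pose proof (exp_pos (-y)). pose proof (pow_lt y m Hy).
  split.
  { eapply deriv_val; [unfold hh; exact H6|].
    rewrite Hsm. rewrite Hal'.
    set (N1 := INR (S m)). set (Ym := y ^ m) in *. set (F := INR (Factorial.fact (S m))) in *.
    set (e := exp (- y)) in *. set (b := bb y). set (K0 := K).
    unfold minus, plus, opp, mult; simpl. unfold K0, K, N1.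
    assert (Hyy : 0 < y * Ym) by (subst Ym; nra).
    clearbody e Ym F b. rewrite !S_INR. field.
    repeat split; try lra. all: apply Rgt_not_eq; lra. }
  intros Hh.
  set (D := bb y - (INR (S m) / y - 1) * bb y ^ 2 / al y).
  assert (HD : y * D = - (bb y / al y) * hh y + bb y ^ 2 / al y + bb y ^ 3 / al y ^ 2).
  { unfold D, hh, K. rewrite !S_INR. set (a := al y) in *. set (b := bb y) in *.
    clearbody a b. field. lra. }
  assert (0 < - (bb y / al y) * hh y + bb y ^ 2 / al y + bb y ^ 3 / al y ^ 2).
  { assert (0 <= - (bb y / al y) * hh y).
    { assert (0 < bb y / al y) by (apply Rdiv_lt_0_compat; lra). nra. }
    assert (0 < bb y ^ 2 / al y) by (apply Rdiv_lt_0_compat; [apply pow_lt|]; lra).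
    assert (0 < bb y ^ 3 / al y ^ 2) by (apply Rdiv_lt_0_compat; apply pow_lt; lra).
    lra. }
  nra.
Qed.
End Main.

Lemma hh_low m y : 0 < y <= 1 -> -y <= hh m y.
Proof.
  intros Hy. unfold hh.
  pose proof (al_pos m y ltac:(lra)) as Ha. pose proof (f_pos (S m) y ltac:(lra)) as Hb.
  fold (bb m y) in Hb.
  assert (Hal1 : al m y <= 1).
  { unfold al. assert (HF : 1 <= INR (Factorial.fact (S m))).
    { replace 1 with (INR 1) by reflexivity. apply le_INR. apply Factorial.lt_O_fact. }
    assert (He : exp (- y) <= 1) by (rewrite <- exp_0; apply Rlt_le, exp_increasing; lra).
    assert (Hp : y ^ S m <= 1) by (rewrite <- (pow1 (S m)); apply pow_incr; lra).
    assert (0 < y ^ S m) by (apply pow_lt; lra). pose proof (exp_pos (-y)).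
    apply (Rmult_le_reg_r (INR (Factorial.fact (S m)))); [lra|].
    unfold Rdiv. rewrite Rmult_assoc, Rinv_l by lra. nra. }
  assert (0 <= bb m y ^ 2 / al m y) by (apply Rlt_le, Rdiv_lt_0_compat; [apply pow_lt|]; lra).
  assert (2 <= K m) by (unfold K; rewrite !S_INR; pose proof (pos_INR m); lra).
  nra.
Qed.

Lemma hh_pos m y : 0 < y -> 0 < hh m y.
Proof. apply pos_lemma; [apply hh_deriv | apply hh_low]. Qed.

Theorem lemma37 (k : nat) (hk : (2 <= k)%nat) :
  forall x : R, 0 < x -> exists l : R, is_derive (g k) x l /\ 0 < l.
Proof.
  intros x Hx. destruct k as [|[|m]]; [lia|lia|].
  pose proof (f_pos (S m) x Hx) as Hb. fold (bb m x) in Hb.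
  pose proof (al_pos m x Hx) as Ha.
  assert (Hc' := f_deriv m x).
  assert (Hid : is_derive (fun z : R => z) x 1) by (auto_derive; auto).
  pose proof (is_derive_mult _ _ x _ _ Hid Hc' ltac:(intros; apply Rmult_comm)) as H1.
  assert (Hbd : is_derive (bb m) x (al m x)) by (unfold bb, al; apply f_deriv).
  pose proof (is_derive_div _ _ x _ _ H1 Hbd ltac:(lra)) as H2.
  eexists. split.
  { unfold g. replace (S (S m) - 1)%nat with (S m) by lia. exact H2. }
  pose proof (hh_pos m x Hx) as Hh.
  pose proof (c_eq m x) as Hc. simpl. rewrite Hc.
  assert (Hnum : (1 * (bb m x + al m x) + x * (exp (- x) * x ^ m / INR (Factorial.fact m))) * bb m x
                 - x * (bb m x + al m x) * al m x = al m x * hh m x).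
  { unfold hh, K. rewrite !S_INR.
    assert (Hxm : x * (exp (- x) * x ^ m / INR (Factorial.fact m)) = INR (S m) * al m x).
    { unfold al. change (x ^ S m) with (x * x ^ m).
      change (Factorial.fact (S m)) with (S m * Factorial.fact m)%nat. rewrite mult_INR.
      pose proof (fact_pos m). assert (0 < INR (S m)) by (apply lt_0_INR; lia). field. lra. }
    rewrite Hxm, S_INR. set (a := al m x) in *. set (b := bb m x) in *. clearbody a b. field. lra. }
  unfold mult, plus; simpl. rewrite Hnum.
  apply Rdiv_lt_0_compat; [apply Rmult_lt_0_compat; lra | nra].
Qed.
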